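(* Let $G$ be a finite simple connected graph with no $K_5$ minor, not isomorphic to $C_5$, that has no dynamic $4$-coloring, and suppose $G$ has the minimum number of edges among all such graphs (i.e., every finite simple connected graph with no $K_5$ minor, not isomorphic to $C_5$, and with fewer edges than $G$ is dynamically $4$-colorable). Then $G$ is $2$-connected.
   Context: All graphs are finite and simple. Given a proper vertex coloring of a graph, a vertex $v$ is happy if either $v$ has at most one neighbor or $v$ has two neighbors receiving distinct colors. A dynamic $4$-coloring is a proper vertex coloring with at most $4$ colors in which every vertex is happy. *)

(* Defs.v *)
From mathcomp Require Import all_boot.
Set Implicit Arguments. Unset Strict Implicit. Unset Printing Implicit Defensive.

Section Graphs.
Variable T : finType.
Implicit Type e : rel T.

Definition simple_graph e : Prop := symmetric e /\ irreflexive e.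

(* number of edges: ordered adjacent pairs counted twice *)
Definition nedges e : nat := #|[set p : T * T | e p.1 p.2]| %/ 2.

Definition restr e (S : {set T}) : rel T := [rel x y | [&& e x y, x \in S & y \in S]].

Definition connected_in e (S : {set T}) : Prop :=
  S != set0 /\ forall x y, x \in S -> y \in S -> connect (restr e S) x y.

Definition connected_graph e : Prop := connected_in e [set: T].

Definition two_connected e : Prop :=
  2 < #|T| /\ forall v : T, connected_in e [set~ v].

Definition has_K5_minor e : Prop :=
  exists B : 'I_5 -> {set T},
    (forall i, connected_in e (B i)) /\
    (forall i j, i != j -> [disjoint B i & B j]) /\
    (forall i j, i != j -> exists x y, [/\ x \in B i, y \in B j & e x y]).

Definition c5rel : rel 'I_5 :=
  fun i j => (nat_of_ord j == (i.+1 %% 5)) || (nat_of_ord i == (j.+1 %% 5)).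

Definition iso_C5 e : Prop :=
  exists f : 'I_5 -> T, bijective f /\ forall i j, e (f i) (f j) = c5rel i j.

Definition proper_coloring e (c : T -> 'I_4) : Prop :=
  forall x y, e x y -> c x != c y.

Definition happy e (c : T -> 'I_4) (v : T) : Prop :=
  #|[set u | e v u]| <= 1 \/ exists u w, [/\ e v u, e v w & c u != c w].

Definition dynamic_4_colorable e : Prop :=
  exists c : T -> 'I_4, proper_coloring e c /\ forall v, happy e c v.

End Graphs.

(* Main.v *)
Require Import Defs.
From mathcomp Require Import all_boot.
From Stdlib Require Import Classical.
From mathcomp Require Import zify.
Set Implicit Arguments. Unset Strict Implicit. Unset Printing Implicit Defensive.

Lemma connect_map (T1 T2 : finType) (e1 : rel T1) (e2 : rel T2) (f : T1 -> T2) :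
  (forall x y, e1 x y -> e2 (f x) (f y)) ->
  forall x y, connect e1 x y -> connect e2 (f x) (f y).
Proof.
move=> h x _ /connectP[p pp ->]; elim: p x pp => //= y p IH x /andP[/h exy /IH].
by apply: connect_trans; apply: connect1.
Qed.

Lemma exitP (T : finType) (e : rel T) (P : {set T}) x z :
  connect e x z -> x \in P -> z \notin P ->
  exists a b, [/\ connect (restr e P) x a, a \in P, b \notin P & e a b].
Proof.
move=> /connectP[p pp ->]; elim: p x pp => [|y p IH] x /=; first by move=> _ ->.
move=> /andP[exy pp] Px nPz.
case Py: (y \in P).
- have [a [b [ca Pa nPb eab]]] := IH y pp Py nPz.
  exists a, b; split=> //; apply: connect_trans ca; apply: connect1.
  by rewrite /restr /= exy Px Py.
- by exists x, y; rewrite Py.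
Qed.

Section Sub.
Variables (T : finType) (e : rel T) (S : {set T}).
Definition subT := {x : T | x \in S}.
Definition esub : rel subT := fun u w => e (val u) (val w).

Lemma esub_simple : simple_graph e -> simple_graph esub.
Proof. by move=> [se ie]; split=> [u w|u]; [exact: se | exact: ie]. Qed.

Lemma esub_connected (v : T) : symmetric e -> v \in S ->
  (forall z, z \in S -> connect (restr e S) z v) -> connected_graph esub.
Proof.
move=> se vS hc; split.
  by apply/set0Pn; exists (Sub v vS); rewrite inE.
move=> u w _ _.
have h : forall a b, connect (restr e S) a b -> connect esub (insubd u a) (insubd u b).
  apply: connect_map => a b /and3P[eab aS bS].
  by rewrite /restr /= /esub !insubdK // eab !inE.
have symr : connect_sym (restr e S).
  by apply: sym_connect_sym => a b; rewrite /restr /= (se a b); case: (a \in S); case: (b \in S); rewrite ?andbF.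
have: connect (restr e S) (val u) (val w).
  apply: connect_trans (hc _ (valP u)) _; rewrite symr; exact: hc (valP w).
move/h; rewrite !valKd.
apply: connect_sub => a b eab; apply: connect1; by rewrite /restr /= eab !inE.
Qed.
End Sub.
Arguments esub {T} e S.
Arguments subT {T} S.

Section Sub2.
Variables (T : finType) (e : rel T) (S : {set T}).

Lemma esub_noK5 : ~ has_K5_minor e -> ~ has_K5_minor (esub e S).
Proof.
move=> nK [B [Bc [Bd Be]]]; apply: nK.
exists (fun i => val @: B i); split; [|split].
- move=> i; have [ne hc] := Bc i; split.
    by case/set0Pn: ne => u uB; apply/set0Pn; exists (val u); apply: imset_f.
  move=> x y /imsetP[u uB ->] /imsetP[w wB ->].
  have := hc u w uB wB; apply: connect_map => a b /and3P[eab aB bB].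
  by rewrite /restr /= -[e _ _]/(esub e S a b) eab !imset_f.
- move=> i j ij; rewrite disjoint_subset; apply/subsetP => x /imsetP[u uB ->].
  rewrite inE; apply/imsetP => [[w wB /val_inj eq]]; subst.
  by rewrite (disjointFr (Bd i j ij) uB) in wB.
- move=> i j ij; have [x [y [xB yB exy]]] := Be i j ij.
  by exists (val x), (val y); split => //; apply: imset_f.
Qed.

Lemma esub_nedges v w : symmetric e -> v \in S -> w \notin S -> e v w ->
  nedges (esub e S) < nedges e.
Proof.
move=> se vS wS evw.
set E := [set p : T * T | e p.1 p.2].
set Es := [set p : subT S * subT S | esub e S p.1 p.2].
pose f (p : subT S * subT S) := (val p.1, val p.2).
have finj : injective f.
  by move=> [a b] [c d] [/val_inj -> /val_inj ->].
have wv : w != v by apply: contraNneq wS => ->.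
have sub : f @: Es \subset E :\ (v, w) :\ (w, v).
  apply/subsetP => _ /imsetP[[a b] ab ->]; rewrite !inE in ab *.
  rewrite /f /=; apply/and3P; split; last exact: ab.
    by apply/eqP => [[ea _]]; have := svalP a; rewrite ea (negbTE wS).
  by apply/eqP => [[_ eb]]; have := svalP b; rewrite eb (negbTE wS).
have := subset_leq_card sub; rewrite card_imset // => h.
have h1 := cardsD1 (v, w) E; have h2 := cardsD1 (w, v) (E :\ (v, w)).
have i1 : (v, w) \in E by rewrite inE.
have i2 : (w, v) \in E :\ (v, w).
  rewrite !inE /=; apply/andP; split; last by rewrite se.
  by apply/eqP => [[]] /eqP; rewrite (negbTE wv).
rewrite i1 in h1; rewrite i2 in h2.
rewrite /nedges -/E -/Es.
have : #|Es| + 2 <= #|E|.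
  by rewrite h1 h2 /= addnC !add1n !ltnS.
move: #|Es| #|E| => a b; lia.
Qed.
End Sub2.

Definition colrn (i0 i : nat) : nat := nth 0 [:: 0;1;2;3;1] ((i + 5 - i0) %% 5).
Definition c5n (i j : nat) := (j == (i.+1 %% 5)) || (i == (j.+1 %% 5)).
Lemma F1n : all (fun i0 => all (fun i => all (fun j =>
  ~~ c5n i j || (colrn i0 i != colrn i0 j)) (iota 0 5)) (iota 0 5)) (iota 0 5).
Proof. by []. Qed.
Lemma F2n : all (fun i0 => all (fun i => (i == i0) ||
  [&& c5n i ((i.+1) %% 5), c5n i ((i + 4) %% 5) &
   (colrn i0 ((i.+1) %% 5) != colrn i0 ((i + 4) %% 5))]) (iota 0 5)) (iota 0 5).
Proof. by []. Qed.
Lemma colrn_lt i0 i : colrn i0 i < 4.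
Proof. rewrite /colrn; case: ((i + 5 - i0) %% 5) => [|[|[|[|[|n]]]]] //=; by rewrite nth_nil. Qed.

Definition colr (i0 i : 'I_5) : 'I_4 := inord (colrn i0 i).

Lemma colr_neq i0 i j : (colr i0 i != colr i0 j) = (colrn i0 i != colrn i0 j).
Proof. by rewrite /colr -(inj_eq val_inj) /= !inordK ?colrn_lt. Qed.

Lemma F1 (i0 i j : 'I_5) : c5rel i j -> colr i0 i != colr i0 j.
Proof.
have m5 (k : 'I_5) : nat_of_ord k \in iota 0 5 by rewrite mem_iota ltn_ord.
move=> h; rewrite colr_neq.
move: F1n => /allP/(_ _ (m5 i0))/allP/(_ _ (m5 i))/allP/(_ _ (m5 j)).
by rewrite -[c5n _ _]/(c5rel i j) h.
Qed.

Lemma F2 (i0 i : 'I_5) : i != i0 -> exists j k : 'I_5,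
  [/\ c5rel i j, c5rel i k & colr i0 j != colr i0 k].
Proof.
have m5 (k : 'I_5) : nat_of_ord k \in iota 0 5 by rewrite mem_iota ltn_ord.
move=> ii0; move: F2n => /allP/(_ _ (m5 i0))/allP/(_ _ (m5 i)).
case/orP => [/eqP/val_inj eq|/and3P[h1 h2 h3]]; first by rewrite eq eqxx in ii0.
exists (inord (i.+1 %% 5)), (inord ((i + 4) %% 5)).
rewrite colr_neq /c5rel !inordK ?ltn_pmod //; split=> //.
Qed.

Section Piece.
Variables (T : finType) (e : rel T).

Definition happyS (S : {set T}) (c : T -> 'I_4) x :=
  #|[set u in S | e x u]| <= 1 \/
  exists u w, [/\ u \in S, w \in S, e x u, e x w & c u != c w].

Lemma piece_col (S : {set T}) v w :
 simple_graph e -> ~ has_K5_minor e ->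
 (forall (T' : finType) (e' : rel T'),
      simple_graph e' -> connected_graph e' -> ~ has_K5_minor e' -> ~ iso_C5 e' ->
      nedges e' < nedges e -> dynamic_4_colorable e') ->
 v \in S -> w \notin S -> e v w -> (forall z, z \in S -> connect (restr e S) z v) ->
 exists c : T -> 'I_4, (forall x y, x \in S -> y \in S -> e x y -> c x != c y) /\
   (forall x, x \in S -> x != v -> happyS S c x).
Proof.
move=> sg nK H vS wS evw hc.
pose s0 : subT S := Sub v vS.
have vK : forall x, x \in S -> val (insubd s0 x) = x by move=> x; apply: insubdK.
have eK : forall x y, x \in S -> y \in S -> esub e S (insubd s0 x) (insubd s0 y) = e x y.
  by move=> x y xS yS; rewrite /esub !vK.
have nbr : forall x (xs : subT S), val xs = x ->
    [set u in S | e x u] = val @: [set u | esub e S xs u].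
  move=> x xs <-; apply/setP => u; rewrite !inE; apply/andP/imsetP => [[uS exu]|[u']].
  - exists (insubd s0 u); last by rewrite vK. by rewrite inE /esub vK.
  - by rewrite inE => h ->; rewrite (valP u').
case: (classic (iso_C5 (esub e S))) => [[f [[g fg gf] hf]] | niso].
- pose i0 := g s0.
  exists (fun x => colr i0 (g (insubd s0 x))); split.
  + by move=> x y xS yS exy; apply: F1; rewrite -hf !gf eK.
  + move=> x xS xv; right.
    have : g (insubd s0 x) != i0.
      apply: contra xv => /eqP h; have := congr1 f h; rewrite !gf => /(congr1 val).
      by rewrite vK // => ->.
    move/F2 => [j [k [hj hk hjk]]].
    have eX : forall y, e x (val y) = esub e S (insubd s0 x) y by move=> y; rewrite /esub vK.
    exists (val (f j)), (val (f k)); split; try exact: valP.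
    * by rewrite eX -{1}(gf (insubd s0 x)) hf.
    * by rewrite eX -{1}(gf (insubd s0 x)) hf.
    * by rewrite !valKd !fg.
- have [c' [pc hc']] := H _ (esub e S) (@esub_simple _ _ S sg) (esub_connected (proj1 sg) vS hc)
     (esub_noK5 nK) niso (esub_nedges (proj1 sg) vS wS evw).
  exists (fun x => c' (insubd s0 x)); split.
  + by move=> x y xS yS exy; apply: pc; rewrite eK.
  + move=> x xS _; case: (hc' (insubd s0 x)) => [h|[u [w' [eu ew cuw]]]]; [left|right].
    * by rewrite (nbr x (insubd s0 x) (vK x xS)) card_imset //; exact: val_inj.
    * exists (val u), (val w'); rewrite !valKd; split => //; try exact: valP;
      by rewrite -{1}(vK x xS).
Qed.
End Piece.

Definition swp (T : eqType) (x y z : T) := if z == x then y else if z == y then x else z.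
Lemma swpK (T : eqType) (x y : T) : involutive (swp x y).
Proof.
move=> z; rewrite /swp; case: (eqVneq z x) => [->|zx]; first by rewrite eqxx; case: eqVneq.
case: (eqVneq z y) => [->|zy]; first by rewrite eqxx.
by rewrite (negbTE zx) (negbTE zy).
Qed.
Lemma swp_inj (T : eqType) (x y : T) : injective (swp x y).
Proof. exact: inv_inj (swpK x y). Qed.

Lemma restr_mono (T : finType) (e : rel T) (A B : {set T}) a b :
  A \subset B -> connect (restr e A) a b -> connect (restr e B) a b.
Proof.
move=> AB; apply: connect_sub => p q /and3P[epq pA qA]; apply: connect1.
by rewrite /restr /= epq !(subsetP AB).
Qed.

Lemma two_colors (A C : 'I_4) : exists B : 'I_4, B != A /\ B != C.
Proof.
have : ~~ ([set: 'I_4] \subset [set A; C]).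
  apply/negP => /subset_leq_card; rewrite cardsT card_ord cards2; by case: (A != C).
case/subsetPn => B _; rewrite !inE negb_or => /andP[h1 h2]; by exists B.
Qed.

Theorem lemma2p1 (T : finType) (e : rel T) :
  simple_graph e -> connected_graph e -> ~ has_K5_minor e -> ~ iso_C5 e ->
  ~ dynamic_4_colorable e ->
  (forall (T' : finType) (e' : rel T'),
      simple_graph e' -> connected_graph e' -> ~ has_K5_minor e' -> ~ iso_C5 e' ->
      nedges e' < nedges e -> dynamic_4_colorable e') ->
  two_connected e.
Proof.
move=> sg cg nK nC5 ndc H; have [se ie] := sg.
have T2 : 2 < #|T|.
  rewrite ltnNge; apply/negP => hT; apply: ndc.
  have h4 : #|T| <= 4 by apply: leq_trans hT _.
  exists (fun x => widen_ord h4 (enum_rank x)); split.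
    move=> x y exy; apply/eqP => /(congr1 val) /= /val_inj /enum_rank_inj exy'.
    by rewrite exy' ie in exy.
  move=> v; left; apply: leq_trans (_ : #|[set~ v]| <= 1).
    apply: subset_leq_card; apply/subsetP => u; rewrite !inE.
    by apply: contraL => /eqP ->; rewrite ie.
  by rewrite cardsC1; move: hT; case: #|T| => [|[|[|]]].
split=> // v.
set A := [set~ v].
have An : A != set0.
  by rewrite -card_gt0 cardsC1; move: T2; case: #|T| => [|[|]].
case Hc : [forall x, forall y, (x \in A) ==> (y \in A) ==> connect (restr e A) x y].
  split=> // x y xA yA.
  by move/forallP: Hc => /(_ x)/forallP/(_ y); rewrite xA yA.
exfalso; move/negbT: Hc => /forallPn[x] /forallPn[y]; rewrite !negb_imply.
case/and3P => xA yA nxy.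
have ce : forall a b, connect e a b.
  move=> a b; have := (proj2 cg) a b (in_setT a) (in_setT b).
  by apply: connect_sub => p q /and3P[epq _ _]; apply: connect1.
set C1 := [set z in A | connect (restr e A) x z].
set S1 := v |: C1.
set S2 := ~: C1.
have sep : forall a b, a \in C1 -> b != v -> e a b -> b \in C1.
  move=> a b; rewrite !inE => /andP[av xa] bv eab; rewrite bv /=.
  apply: connect_trans xa (connect1 _); by rewrite /restr /= eab !inE av.
have xC1 : x \in C1 by rewrite inE xA connect0.
have vC1 : v \notin C1 by rewrite !inE eqxx.
have yv : y != v by move: yA; rewrite !inE.
have yC : y \notin C1 by rewrite inE (negbTE nxy) andbF.
have yS1 : y \notin S1 by rewrite in_setU1 negb_or yv.
have vS1 : v \in S1 by rewrite in_setU1 eqxx.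
have vS2 : v \in S2 by rewrite in_setC.
have edge_in : forall a b, e a b ->
    (a \in S1) && (b \in S1) \/ (a \in S2) && (b \in S2).
  move=> a b eab; case aC: (a \in C1).
    left; rewrite !in_setU1 aC orbT /=; case: (eqVneq b v) => // bv.
    by rewrite (sep a b aC bv eab) orbT.
  case bC: (b \in C1).
    left; rewrite !in_setU1 bC orbT andbT aC orbF; case: (eqVneq a v) => // av.
    by have := sep b a bC av; rewrite se eab aC => /(_ isT).
  by right; rewrite !in_setC aC bC.
have [u1 [b1 [_ u1C b1C e1]]] := exitP (ce x v) xC1 vC1.
have b1v : b1 = v by apply/eqP; apply: contraNT b1C => h; exact: sep e1.
subst b1.
have yS1' : y \in ~: S1 by rewrite in_setC.
have vS1' : v \notin ~: S1 by rewrite in_setC negbK.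
have [u2 [b2 [_ u2S b2S e2]]] := exitP (ce y v) yS1' vS1'.
rewrite in_setC negbK in b2S; rewrite in_setC in u2S.
have b2v : b2 = v.
  move: b2S; rewrite in_setU1 => /orP[/eqP //|b2C].
  have u2v : u2 != v by apply: contraNneq u2S => ->.
  by move: u2S; rewrite in_setU1 (sep b2 u2 b2C u2v) ?orbT // se.
subst b2.
have u1S1 : u1 \in S1 by rewrite in_setU1 u1C orbT.
have u2S2 : u2 \in S2 by move: u2S; rewrite in_setU1 in_setC negb_or => /andP[].
have u1S2 : u1 \notin S2 by rewrite in_setC negbK.
have conn1 : forall z, z \in S1 -> connect (restr e S1) z v.
  move=> z; rewrite in_setU1 => /orP[/eqP -> //|zC].
  have [a [b [cza aC bC eab]]] := exitP (ce z v) zC vC1.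
  have bv : b = v by apply/eqP; apply: contraNT bC => h; exact: sep eab.
  subst b; apply: connect_trans (restr_mono (subsetUr _ _) cza) (connect1 _).
  by rewrite /restr /= eab vS1 in_setU1 aC orbT.
have conn2 : forall z, z \in S2 -> connect (restr e S2) z v.
  move=> z zS2; case: (eqVneq z v) => [-> //|zv].
  have zS1 : z \in ~: S1 by rewrite in_setC in_setU1 negb_or zv; rewrite in_setC in zS2.
  have [a [b [cza aS bS eab]]] := exitP (ce z v) zS1 vS1'.
  rewrite in_setC negbK in bS.
  have aS2 : a \in S2 by move: aS; rewrite in_setC in_setU1 in_setC negb_or => /andP[].
  have bv : b = v.
    case: (edge_in a b eab) => /andP[]; last first.
      by move=> _; rewrite in_setC; move: bS; rewrite in_setU1 => /orP[/eqP//|->].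
    by rewrite in_setC in aS; rewrite (negbTE aS).
  subst b; apply: connect_trans (restr_mono _ cza) (connect1 _).
    by apply/subsetP => q; rewrite !in_setC in_setU1 negb_or => /andP[].
  by rewrite /restr /= eab vS2 aS2.
have ev : forall u, e u v -> e v u by move=> u; rewrite se.
have [c1 [pc1 hc1]] := piece_col sg nK H vS1 u2S (ev _ e2) conn1.
have [c2 [pc2 hc2]] := piece_col sg nK H vS2 u1S2 (ev _ e1) conn2.
have [B [B1 B2]] := two_colors (c1 v) (c1 u1).
have ab : c2 v != c2 u2 := pc2 v u2 vS2 u2S2 (ev _ e2).
pose p1 := swp (c2 v) (c1 v).
pose p2 := swp (p1 (c2 u2)) B.
pose pi k := p2 (p1 k).
have piinj : injective pi by move=> ? ? /swp_inj/swp_inj.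
have p1a : p1 (c2 v) = c1 v by rewrite /p1 /swp eqxx.
have pia : pi (c2 v) = c1 v.
  rewrite /pi p1a /p2 /swp.
  have -> : (c1 v == p1 (c2 u2)) = false.
    by apply/negbTE; rewrite -p1a (inj_eq (@swp_inj _ _ _)).
  by rewrite eq_sym (negbTE B1).
have pib : pi (c2 u2) = B by rewrite /pi /p2 /swp eqxx.
pose c z := if z \in S1 then c1 z else pi (c2 z).
have cS1 : forall z, z \in S1 -> c z = c1 z by move=> z zS; rewrite /c zS.
have cS2 : forall z, z \in S2 -> c z = pi (c2 z).
  move=> z zS2; rewrite /c; case: ifP => // zS1.
  move: zS1; rewrite in_setU1 => /orP[/eqP ->|zC]; first by rewrite pia.
  by rewrite in_setC zC in zS2.
apply: ndc; exists c; split.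
  move=> p q epq; case: (edge_in p q epq) => /andP[pS qS].
    by rewrite !cS1 //; apply: pc1.
  by rewrite !cS2 // (inj_eq piinj); apply: pc2.
move=> z; case: (eqVneq z v) => [->|zv].
  right; exists u1, u2; split; [by rewrite se|by rewrite se|].
  by rewrite cS1 // cS2 // pib eq_sym.
case zS1: (z \in S1).
  have nb : [set u | e z u] = [set u in S1 | e z u].
    apply/setP => u; rewrite in_set [in RHS]in_set.
    case ezu: (e z u); rewrite ?andbT ?andbF //.
    case: (edge_in z u ezu) => /andP[] // zS2 _.
    move: zS1; rewrite in_setU1 (negbTE zv) /= => zC.
    by rewrite in_setC zC in zS2.
  case: (hc1 z zS1 zv) => [h|[u [w [uS wS ezu ezw cuw]]]]; [left|right].
    by rewrite nb.
  by exists u, w; split => //; rewrite !cS1.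
have zS2 : z \in S2.
  by rewrite in_setC; apply: contraFN zS1 => zC; rewrite in_setU1 zC orbT.
have nb : [set u | e z u] = [set u in S2 | e z u].
  apply/setP => u; rewrite in_set [in RHS]in_set.
  case ezu: (e z u); rewrite ?andbT ?andbF //.
  by case: (edge_in z u ezu) => /andP[] //; rewrite zS1.
case: (hc2 z zS2 zv) => [h|[u [w [uS wS ezu ezw cuw]]]]; [left|right].
  by rewrite nb.
by exists u, w; split => //; rewrite !cS2 // (inj_eq piinj).
Qed.
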